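(* Let $G$ be a finite group. The minimal number of (pairwise inequivalent) irreducible components of a faithful complex representation of $G$ is at most the minimal length $\ell$ of a chain of subgroups $\{e\}=H_0<H_1<\dots<H_\ell=G$ such that every interval $[H_i,H_{i+1}]$ of the subgroup lattice is bottom Boolean.
   Context: For subgroups $H\subseteq K$, $[H,K]$ is the lattice of subgroups between $H$ and $K$. The bottom interval of a finite lattice $L$ is $[\hat 0,b]$ where $b$ is the join of all atoms (minimal elements of $L\setminus\{\hat 0\}$); $L$ is bottom Boolean if its bottom interval is a Boolean lattice (distributive, bounded, every element has a unique complement). *)

(* Defs.v *)
From HB Require Import structures.
From mathcomp Require Import all_boot all_order all_algebra all_fingroup all_solvable all_field all_character.
Set Implicit Arguments. Unset Strict Implicit. Unset Printing Implicit Defensive.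

Section SubgroupLattice.
Variable gT : finGroupType.
Local Open Scope group_scope.

Definition in_interval (H K L : {set gT}) : bool := (H \subset L) && (L \subset K).

Definition interval_atom (H K : {set gT}) (L : {group gT}) : bool :=
  [&& in_interval H K L, H \proper L &
   [forall M : {group gT}, ((H \proper M) && (M \subset L)) ==> (M == L :> {set gT})]].

(* the join b of all atoms of [H, K] (equal to H when there is no atom) *)
Definition interval_atom_join (H K : {set gT}) : {set gT} :=
  << H :|: \bigcup_(L : {group gT} | interval_atom H K L) (L : {set gT}) >>.

Definition boolean_interval (H b : {set gT}) : Prop :=
  (forall X Y Z : {group gT}, in_interval H b X -> in_interval H b Y ->
      in_interval H b Z -> X :&: (Y <*> Z) = (X :&: Y) <*> (X :&: Z)) /\
  (forall X : {group gT}, in_interval H b X ->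
      exists Y : {group gT}, [/\ in_interval H b Y, X :&: Y = H, X <*> Y = b &
        forall Y' : {group gT}, in_interval H b Y' -> X :&: Y' = H ->
           X <*> Y' = b -> Y' = Y]).

Definition bottom_boolean (H K : {set gT}) : Prop :=
  boolean_interval H (interval_atom_join H K).

End SubgroupLattice.

(* Main.v *)
Require Import Defs.
From HB Require Import structures.
From mathcomp Require Import all_boot all_order all_algebra all_fingroup all_solvable all_field all_character.
From mathcomp Require Import ring zify.
Set Implicit Arguments. Unset Strict Implicit. Unset Printing Implicit Defensive.
Import GroupScope Order.TTheory GRing.Theory Num.Theory.
Local Open Scope ring_scope.

Lemma idem_aux n r (C : 'M[algC]_(n, r)) (B : 'M[algC]_(r, n)) C' B' :
  C' *m C = 1%:M -> B *m B' = 1%:M -> C *m B *m (C *m B) = C *m B ->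
  B *m C = 1%:M.
Proof.
move=> CC BB e.
have h1 : C' *m (C *m B *m (C *m B)) *m B' = (C' *m C) *m (B *m C) *m (B *m B').
  by rewrite !mulmxA.
have h2 : C' *m (C *m B) *m B' = (C' *m C) *m (B *m B') by rewrite !mulmxA.
by rewrite CC BB mul1mx mulmx1 e h2 CC BB mulmx1 in h1.
Qed.

Lemma trace_idem n (P : 'M[algC]_n) : P *m P = P -> \tr P = (\rank P)%:R.
Proof.
move=> PP.
have /row_fullP [C CC] := col_base_full P.
have /row_freeP [B BB] := row_base_free P.
have e : row_base P *m col_base P = 1%:M.
  by apply: (idem_aux CC BB); rewrite mulmx_base.
by rewrite -{1}(mulmx_base P) mxtrace_mulC e mxtrace1.
Qed.

Section Rfix.
Variables (gT : finGroupType) (G X : {group gT}) (n : nat).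
Variable rG : mx_representation algC G n.
Hypothesis sXG : X \subset G.

Let P : 'M[algC]_n := (#|X|%:R^-1 : algC) *: \sum_(x in X) rG x.

Let sumR y : y \in X -> \sum_(x in X) rG x *m rG y = \sum_(x in X) rG x.
Proof.
move=> Xy; have Gy := subsetP sXG y Xy.
rewrite (reindex_inj (mulIg (y^-1)%g)) /=.
apply: eq_big => [x|x Xx]; first by rewrite groupMr // groupV.
by rewrite -repr_mxM ?mulgKV // (subsetP sXG) // groupMr ?groupV.
Qed.

Let sumL y : y \in X -> rG y *m \sum_(x in X) rG x = \sum_(x in X) rG x.
Proof.
move=> Xy; have Gy := subsetP sXG y Xy.
rewrite mulmx_sumr (reindex_inj (mulgI (y^-1)%g)) /=.
apply: eq_big => [x|x Xx]; first by rewrite groupMl // groupV.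
by rewrite -repr_mxM ?mulKVg // (subsetP sXG) // groupMl ?groupV.
Qed.

Let PR y : y \in X -> P *m rG y = P.
Proof. by move=> Xy; rewrite /P -scalemxAl mulmx_suml sumR. Qed.

Let PL y : y \in X -> rG y *m P = P.
Proof. by move=> Xy; rewrite /P -scalemxAr sumL. Qed.

Let PP : P *m P = P.
Proof.
rewrite {1}/P -scalemxAl mulmx_suml (eq_bigr (fun _ => P)) => [|x Xx]; last exact: PL.
rewrite sumr_const -scaler_nat scalerA mulVf ?scale1r //.
by rewrite pnatr_eq0 -lt0n cardG_gt0.
Qed.

Let Pfix : (P :=: rfix_mx rG X)%MS.
Proof.
apply/eqmxP/andP; split; first by apply/rfix_mxP => y Xy; exact: PR.
have -> : rfix_mx rG X = rfix_mx rG X *m P.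
  rewrite /P -scalemxAr mulmx_sumr (eq_bigr (fun _ => rfix_mx rG X)).
    rewrite sumr_const -scaler_nat scalerA mulVf ?scale1r //.
    by rewrite pnatr_eq0 -lt0n cardG_gt0.
  by move=> x Xx; apply: rfix_mx_id.
exact: submxMl.
Qed.

Lemma rfix_rank : '['Res[X] (cfRepr rG), 1] = (\rank (rfix_mx rG X))%:R.
Proof.
rewrite -Pfix -trace_idem //= /P mxtraceZ cfdotE; congr (_ * _).
rewrite raddf_sum /=; apply: eq_bigr => x Xx.
by rewrite cfun1E Xx conjC1 mulr1 cfResE // cfunE (subsetP sXG).
Qed.

End Rfix.

Definition D (gT : finGroupType) (G : {group gT}) (phi : 'CF(G)) (X : {group gT}) :=
  '['Res[X] phi, 1]_X.

Section DLemmas.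
Variables (gT : finGroupType) (G : {group gT}).

Lemma D_mono (chi : 'CF(G)) (X Y : {group gT}) :
  chi \is a character -> Y \subset X -> X \subset G -> D chi X <= D chi Y.
Proof.
case/char_reprP=> [[n rG] ->] sYX sXG /=.
rewrite /D !rfix_rank ?(subset_trans sYX) // ler_nat.
by apply: mxrankS; apply: rfix_mxS.
Qed.

Lemma D_ge0 (chi : 'CF(G)) (X : {group gT}) :
  chi \is a character -> X \subset G -> 0 <= D chi X.
Proof.
by case/char_reprP=> [[n rG] ->] sXG /=; rewrite /D rfix_rank // ler0n.
Qed.

Lemma D_nat (chi : 'CF(G)) (X : {group gT}) :
  chi \is a character -> X \subset G -> D chi X \in Num.nat.
Proof.
by case/char_reprP=> [[n rG] ->] sXG /=; rewrite /D rfix_rank // natr_nat.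
Qed.

Lemma D_add (phi psi : 'CF(G)) (X : {group gT}) : D (phi + psi) X = D phi X + D psi X.
Proof. by rewrite /D raddfD cfdotDl. Qed.

Lemma D_scale a (phi : 'CF(G)) (X : {group gT}) : D (a *: phi) X = a * D phi X.
Proof. by rewrite /D linearZ cfdotZl. Qed.

Lemma D_sum I (r : seq I) (P : pred I) (F : I -> 'CF(G)) (X : {group gT}) :
  D (\sum_(i <- r | P i) F i) X = \sum_(i <- r | P i) D (F i) X.
Proof. by rewrite /D raddf_sum cfdot_suml. Qed.

Lemma D_Res (L : {group gT}) (phi : 'CF(G)) (X : {group gT}) :
  X \subset L -> L \subset G -> D ('Res[L] phi) X = D phi X.
Proof. by move=> sXL sLG; rewrite /D cfResRes. Qed.

End DLemmas.

Section Lift.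
Variables (gT : finGroupType).

Lemma D_expand (L : {group gT}) (phi : 'CF(L)) (X : {group gT}) :
  D phi X = \sum_i '[phi, 'chi_i] * D 'chi_i X.
Proof.
by rewrite {1}(cfun_sum_cfdot phi) D_sum; apply: eq_bigr => i _; rewrite D_scale.
Qed.

Lemma lift_strict (L M : {group gT}) (j : Iirr L) (chi : 'CF(M)) (X Y : {group gT}) :
  chi \is a character -> L \subset M -> '['Res[L] chi, 'chi_j] != 0 ->
  Y \subset X -> X \subset L -> D 'chi_j X < D 'chi_j Y -> D chi X < D chi Y.
Proof.
move=> Nchi sLM nz sYX sXL lt.
have sYL := subset_trans sYX sXL.
rewrite -(D_Res _ sXL sLM) -(D_Res _ sYL sLM) !(D_expand ('Res[L] chi)).
have Nr := cfRes_char L Nchi.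
rewrite (bigD1 j) // [X in _ < X](bigD1 j) //=.
apply: ltr_leD.
  rewrite ltr_pM2l //; have := Cnat_cfdot_char_irr j Nr.
  by rewrite lt0r nz /= => /natr_ge0.
apply: ler_sum => i _; apply: ler_wpM2l.
  exact: natr_ge0 (Cnat_cfdot_char_irr i Nr).
exact: D_mono (irr_char i) sYX sXL.
Qed.

End Lift.

Section Count.
Variable gT : finGroupType.
Implicit Types H C K : {group gT}.

Lemma sum_HC H C K : H \subset K -> C \subset K ->
  \sum_(k in K) #|H :^ k :&: C| =
  (#|H| * #|C| + \sum_(k in K | k \notin (H * C)%g) #|H :^ k :&: C|)%N.
Proof.
move=> sHK sCK; rewrite (bigID (fun k => k \in (H * C)%g)) /=; congr (_ + _)%N.
have sHCK : (H * C)%g \subset K by rewrite mul_subG.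
rewrite (eq_bigl (fun k => k \in (H * C)%g)) => [|k]; last first.
  by apply/andb_idl => /(subsetP sHCK).
rewrite (eq_bigr (fun _ => #|H :&: C|)) => [|k /mulsgP [h c Hh Cc ->]].
  by rewrite sum_nat_const mul_cardG.
by rewrite conjsgM (conjGid Hh) -(cardJg _ c^-1) conjIg conjsgK (conjGid (groupVr Cc)).
Qed.

Lemma count_conj H C K : H \subset K -> C \subset K ->
  (#|H| * #|C| <= \sum_(k in K) #|H :^ k :&: C|)%N.
Proof. by move=> sHK sCK; rewrite sum_HC // leq_addr. Qed.

Lemma count_conj_strict H K : H \subset K -> ~~ (K \subset H) ->
  (#|H| * #|H| < \sum_(k in K) #|H :^ k :&: H|)%N.
Proof.
move=> sHK nsKH; rewrite sum_HC // -addn1 leq_add2l.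
have [k Kk nHk] := subsetPn nsKH.
rewrite (bigD1 k) /=; last by rewrite Kk mulGid.
idtac.
apply: leq_trans (leq_addr _ _); rewrite card_gt0; apply/set0Pn; exists 1%g.
by rewrite inE !group1.
Qed.

End Count.

Lemma sum_D (gT : finGroupType) (M Y : {group gT}) (phi : 'CF(M)) :
  Y \subset M -> \sum_(y in Y) phi y = #|Y|%:R * D phi Y.
Proof.
move=> sYM; rewrite /D cfdotE mulrA divff ?mul1r ?neq0CG //.
by apply: eq_bigr => y Yy; rewrite cfun1E Yy conjC1 mulr1 cfResE.
Qed.

Lemma card_conjI (gT : finGroupType) (A B : {set gT}) x :
  #|A :^ x :&: B| = #|A :&: B :^ x^-1|.
Proof. by rewrite -[LHS](cardJg _ (x^-1)%g) conjIg conjsgK. Qed.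

Section K1.
Variables (gT : finGroupType) (L L' H K : {group gT}) (j : Iirr L').
Hypotheses (sHL' : H \subset L') (sL'L : L' \subset L) (sHK : H \subset K)
  (sKL : K \subset L) (KL' : K :&: L' = H) (nsKH : ~~ (K \subset H))
  (posD : 0 < D 'chi_j H).

Let psi := 'chi_j.

Let sumY (A : {group gT}) (x : gT) :
  \sum_(g in A) psi (g ^ x)%g = #|A :^ x :&: L'|%:R * D psi (A :^ x :&: L')%G.
Proof.
rewrite -sum_D ?subsetIr //.
rewrite [RHS](reindex_inj (@conjg_inj _ x)) /=.
rewrite (bigID (fun g => (g ^ x)%g \in L')) /= [X in _ + X]big1 ?addr0.
  by apply: eq_bigl => g; rewrite inE memJ_conjg.
by move=> g /andP[_ nL]; rewrite cfun0.
Qed.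

Let T (X : {set gT}) := \sum_(x in L) \sum_(g in X) psi (g ^ x)%g.

Let DInd (X : {group gT}) : X \subset L ->
  #|L'|%:R * (#|X|%:R * D ('Ind[L] psi) X) = T X.
Proof.
move=> sXL; rewrite -sum_D // mulr_sumr /T exchange_big /=.
apply: eq_bigr => g Xg; rewrite cfIndE // mulrA divff ?mul1r ?neq0CG //.
Qed.

Let Zk (x k : gT) := (H :^ (k * x) :&: L')%G.
Let Yx (x : gT) := (K :^ x :&: L')%G.

Let Zcard x k : k \in K ->
  #|Zk x k| = #|H :^ k :&: (K :&: L' :^ x^-1)|.
Proof.
move=> Kk; rewrite /= conjsgM card_conjI setIA; congr #|_ :&: _|.
by apply/esym/setIidPl; rewrite -(conjGid Kk) conjSg.
Qed.

Let Ycard x : #|Yx x| = #|K :&: L' :^ x^-1|.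
Proof. by rewrite /= card_conjI. Qed.

Let TH : #|K|%:R * T H =
  \sum_(x in L) \sum_(k in K) #|Zk x k|%:R * D psi (Zk x k).
Proof.
rewrite mulr_natl -sumr_const [RHS]exchange_big /=; apply: eq_bigr => k Kk.
have Lk := subsetP sKL k Kk.
rewrite /T (reindex_inj (mulgI k)) /=.
apply: eq_big => [x|x Lx]; first by rewrite groupMl.
exact: sumY.
Qed.

Let TK : #|H|%:R * T K =
  \sum_(x in L) #|H|%:R * (#|Yx x|%:R * D psi (Yx x)).
Proof. by rewrite /T mulr_sumr; apply: eq_bigr => x Lx; rewrite sumY. Qed.

Let Nineq x : x \in L ->
  (\sum_(k in K) #|Zk x k|)%:R * D psi (Yx x) <=
  \sum_(k in K) #|Zk x k|%:R * D psi (Zk x k).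
Proof.
move=> Lx; rewrite natr_sum mulr_suml; apply: ler_sum => k Kk.
apply: ler_wpM2l; first exact: ler0n.
apply: D_mono (irr_char j) _ _; last exact: subsetIr.
rewrite /= conjsgM setSI // conjSg -(conjGid Kk) conjSg //.
Qed.

Let bound x : x \in L ->
  #|H|%:R * (#|Yx x|%:R * D psi (Yx x)) <=
  \sum_(k in K) #|Zk x k|%:R * D psi (Zk x k).
Proof.
move=> Lx; apply: le_trans (Nineq Lx); rewrite mulrA -natrM.
apply: ler_wpM2r; first by apply: D_ge0 (irr_char j) _; exact: subsetIr.
rewrite ler_nat Ycard (eq_bigr _ (fun k Kk => Zcard x Kk)).
by apply: count_conj => //; apply: subsetIl.
Qed.

Let eY1 : Yx 1 = H.
Proof. by apply: val_inj; rewrite /= conjsg1 KL'. Qed.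

Let strict1 :
  #|H|%:R * (#|Yx 1|%:R * D psi (Yx 1)) <
  \sum_(k in K) #|Zk 1 k|%:R * D psi (Zk 1 k).
Proof.
apply: lt_le_trans (Nineq (group1 L)); rewrite eY1 mulrA -natrM.
rewrite ltr_pM2r // ltr_nat (eq_bigr _ (fun k Kk => Zcard 1 Kk)).
by rewrite invg1 conjsg1 KL'; apply: count_conj_strict.
Qed.

Lemma IndK_lt : D ('Ind[L] psi) K < D ('Ind[L] psi) H.
Proof.
have e1 := DInd sKL; have e2 := DInd (subset_trans sHK sKL).
have lt : #|H|%:R * T K < #|K|%:R * T H.
  rewrite TK TH (bigD1 1%g) ?group1 //= [X in _ < X](bigD1 1%g) ?group1 //=.
  apply: ltr_leD; first exact: strict1.
  by apply: ler_sum => x /andP[Lx _]; apply: bound.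
set c := #|H|%:R * #|L'|%:R * #|K|%:R : algC.
have a1 : #|H|%:R * T K = c * D ('Ind[L] psi) K by rewrite -e1 /c; ring.
have a2 : #|K|%:R * T H = c * D ('Ind[L] psi) H by rewrite -e2 /c; ring.
rewrite a1 a2 ltr_pM2l // in lt.
by rewrite /c !mulr_gt0 ?ltr0n ?cardG_gt0.
Qed.

End K1.

Lemma K1exists (gT : finGroupType) (L L' H K : {group gT}) (j : Iirr L') :
  H \subset L' -> L' \subset L -> H \subset K -> K \subset L ->
  K :&: L' = H -> ~~ (K \subset H) -> 0 < D 'chi_j H ->
  exists i : Iirr L, '['Res[L'] 'chi_i, 'chi_j] != 0 /\ D 'chi_i K < D 'chi_i H.
Proof.
move=> sHL' sL'L sHK sKL KL' nsKH posD.
have lt := IndK_lt sL'L sHK sKL KL' nsKH posD.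
case: (boolP [exists i : Iirr L, ('['Res[L'] 'chi_i, 'chi_j] != 0) && (D 'chi_i K < D 'chi_i H)]).
  by case/existsP => i /andP[a b]; exists i.
move/existsPn => none; exfalso.
move: lt; rewrite !(D_expand ('Ind[L] 'chi_j)).
rewrite (eq_bigr (fun i => '['Ind[L] 'chi_j, 'chi_i] * D 'chi_i H)) ?ltxx //.
move=> i _; have := none i; rewrite negb_and negbK.
have -> : '['Res[L'] 'chi_i, 'chi_j] = ('['Ind[L] 'chi_j, 'chi_i])^*.
  by rewrite -Frobenius_reciprocity cfdotC.
rewrite conjC_eq0; case/orP => [/eqP-> | nlt]; first by rewrite !mul0r.
congr (_ * _); apply/eqP; rewrite eq_le D_mono ?irr_char //=.
by rewrite real_leNgt ?ger0_real ?D_ge0 ?irr_char // (subset_trans sHK sKL).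
Qed.

Section TGen.
Variable gT : finGroupType.

Definition Good (M H : {group gT}) (phi : 'CF(M)) :=
  0 < D phi H /\ forall X : {group gT}, H \proper X -> X \subset M -> D phi X < D phi H.

Definition joinrest (H : {group gT}) (A : {set {group gT}}) (K : {group gT}) :=
  <<(H : {set gT}) :|: \bigcup_(K' in A :\ K) (K' : {set gT})>>%G.

Definition AtomHyp (H L : {group gT}) (A : {set {group gT}}) :=
  forall K, K \in A -> [/\ H \proper K, K \subset L,
    (forall X : {group gT}, H \proper X -> X \subset K -> (X : {set gT}) = K) &
    ~~ (K \subset joinrest H A K)].

Definition CoverHyp (H L : {group gT}) (A : {set {group gT}}) :=
  forall X : {group gT}, H \proper X -> X \subset L -> exists2 K, K \in A & K \subset X.

Lemma Good_triv (H L : {group gT}) : (H : {set gT}) = L -> Good H 'chi[L]_0.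
Proof.
move=> eHL; have sHL : H \subset L by rewrite eHL.
split=> [|X pHX sXL]; last by move: pHX; rewrite properE eHL sXL andbF.
by rewrite /D irr0 cfRes_cfun1 // cfnorm1 ltr01.
Qed.

Lemma T_gen n : forall (A : {set {group gT}}) (H L : {group gT}),
  (#|A| <= n)%N -> H \subset L -> AtomHyp H L A -> CoverHyp H L A ->
  exists i : Iirr L, Good H 'chi_i.
Proof.
elim: n => [|n IHn] A H L cardA sHL hA hC;
  (case: (eqVproper sHL) => [eHL | pHL]; first by exists 0; apply: Good_triv);
  have [K AK sKL] := hC L pHL (subxx _).
  by move: cardA; rewrite leqn0 => /eqP/card0_eq/(_ K); rewrite AK.
have [pHK _ minK nKL'] := hA K AK.
set L' := joinrest H A K in nKL'.
have sHL' : H \subset L' by rewrite /L' /joinrest /= sub_gen // subsetUl.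
have sAL' : forall K', K' \in A :\ K -> K' \subset L'.
  move=> K' AK'; rewrite /L' /joinrest /= sub_gen //.
  by apply: subset_trans (subsetUr _ _); apply: (bigcup_sup K').
have sL'L : L' \subset L.
  rewrite /L' /joinrest /= gen_subG subUset sHL /=.
  by apply/bigcupsP => K' /setD1P [_ AK']; case: (hA K' AK').
have [j [posj goodj]] : exists j : Iirr L', Good H 'chi_j.
  apply: (IHn (A :\ K)) => //.
  - by move: cardA; rewrite (cardsD1 K A) AK.
  - move=> K' AK'; have [/setD1P [_ AK'1]] := (AK', AK').
    case: (hA K' AK'1) => pHK' sK'L minK' nK'; split => //; first exact: sAL'.
    apply: contra nK' => sK'; apply: subset_trans sK' _.
    rewrite /joinrest /= genS // setUS //; apply/bigcupsP => Y.
    case/setD1P => nYK' /setD1P [_ AY]; apply: (bigcup_sup Y).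
    by rewrite !inE nYK' AY.
  - move=> X pHX sXL'.
    have [K'' AK'' sK''X] := hC X pHX (subset_trans sXL' sL'L).
    exists K'' => //; rewrite !inE AK'' andbT.
    apply: contraNneq nKL' => eK; rewrite -eK.
    exact: subset_trans sK''X sXL'.
have KL' : K :&: L' = H.
  have sHI : H \subset K :&: L' by rewrite subsetI (proper_sub pHK) sHL'.
  case: (eqVproper sHI) => [-> // | pHI].
  have := minK (K :&: L')%G pHI (subsetIl _ _) => /= eI.
  by move: nKL'; rewrite -eI subsetIr.
have nsKH : ~~ (K \subset H) by move: pHK; rewrite properE => /andP[].
have [i [nz ltK]] := K1exists sHL' sL'L (proper_sub pHK) sKL KL' nsKH posj.
exists i; split.
  apply: le_lt_trans ltK; apply: D_ge0 (irr_char i) sKL.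
move=> X pHX sXL; have [K'' AK'' sK''X] := hC X pHX sXL.
apply: le_lt_trans (D_mono (irr_char i) sK''X sXL) _.
case: (K'' =P K) => [-> // | nK''K].
have AK''1 : K'' \in A :\ K by rewrite !inE AK'' andbT; apply/eqP.
have [pHK'' _ _ _] := hA K'' AK''.
apply: (lift_strict (irr_char i) sL'L nz (proper_sub pHK'') (sAL' _ AK''1)).
exact: goodj pHK'' (sAL' _ AK''1).
Qed.

End TGen.

Section BB.
Variable gT : finGroupType.

Lemma cover_atoms (H M X : {group gT}) : H \proper X -> X \subset M ->
  exists2 K : {group gT}, interval_atom H M K & K \subset X.
Proof.
move=> pHX sXM.
case: (@arg_minnP _ X (fun Y : {group gT} => (H \proper Y) && (Y \subset X))
   (fun Y => #|Y|)); first by rewrite pHX subxx.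
move=> Y /andP[pHY sYX] minY; exists Y => //.
rewrite /interval_atom /in_interval (proper_sub pHY) (subset_trans sYX sXM) pHY /=.
apply/forallP => Z; apply/implyP => /andP[pHZ sZY].
by rewrite eqEcard sZY /= minY // pHZ (subset_trans sZY sYX).
Qed.

Lemma atom_min (H M K X : {group gT}) : interval_atom H M K ->
  H \proper X -> X \subset K -> (X : {set gT}) = K.
Proof.
case/and3P => _ _ /forallP mK pHX sXK.
by apply/eqP; move/implyP: (mK X); apply; rewrite pHX sXK.
Qed.

Lemma atoms_meet (H M K K' : {group gT}) : interval_atom H M K ->
  interval_atom H M K' -> K != K' -> K :&: K' = H.
Proof.
move=> aK aK' nKK'.
have [_ pHK _] := and3P aK; have [_ pHK' _] := and3P aK'.
have sHI : H \subset K :&: K' by rewrite subsetI !proper_sub.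
case: (eqVproper sHI) => [-> // | pHI].
have e1 := atom_min aK pHI (subsetIl _ _).
have sKK' : K \subset K' by rewrite -e1 subsetIr.
have e2 := atom_min aK' pHK sKK'.
by case/eqP: nKK'; apply: val_inj.
Qed.

End BB.

Lemma bb_T (gT : finGroupType) (H M : {group gT}) :
  H \subset M -> bottom_boolean H M -> exists i : Iirr M, Good H 'chi_i.
Proof.
move=> sHM [hd hc].
set A := [set K : {group gT} | interval_atom H M K].
apply: (@T_gen _ #|A| A) => //; last first.
  move=> X pHX sXM; have [K aK sKX] := cover_atoms pHX sXM.
  by exists K; rewrite ?inE.
move=> K; rewrite inE => aK.
have [/andP[sHK sKM] pHK _] := and3P aK.
split => //; first by move=> X; apply: atom_min aK.
set b := interval_atom_join H M.
have inb : forall K' : {group gT}, interval_atom H M K' -> in_interval H b K'.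
  move=> K' aK'; have [/andP[sHK' _] _ _] := and3P aK'.
  rewrite /in_interval sHK' /b /interval_atom_join sub_gen //.
  by apply: subset_trans (subsetUr _ _); exact: (bigcup_sup K').
have [Y [iY KY KYb _]] := hc K (inb K aK).
have sHY : H \subset Y by case/andP: iY.
have sub : forall K' : {group gT}, K' \in A :\ K -> K' \subset Y.
  move=> K'; rewrite !inE => /andP[nK'K aK'].
  have := hd K' K Y (inb K' aK') (inb K aK) iY.
  rewrite KYb (setIidPl _); last by case/andP: (inb K' aK').
  rewrite (atoms_meet aK' aK nK'K).
  by move=> ->; rewrite joingE gen_subG subUset sHY subsetIr.
have sJY : joinrest H A K \subset Y.
  by rewrite /joinrest /= gen_subG subUset sHY; apply/bigcupsP.
apply/negP => sKJ; have sKY := subset_trans sKJ sJY.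
by move: KY pHK; rewrite (setIidPl sKY) => ->; rewrite properxx.
Qed.

Section Chain.
Variable gT : finGroupType.

Definition Pst (G : {group gT}) (chi : 'CF(G)) (H : {group gT}) :=
  forall X : {group gT}, H \proper X -> X \subset G -> D chi X < D chi H.

Lemma rank_step (G M Hj X : {group gT}) n (rG : mx_representation algC G n) :
  Hj \subset M -> M \subset G -> Hj \subset X -> X \subset G ->
  (\rank (rfix_mx rG (X <*> M)%G) < \rank (rfix_mx rG M))%N ->
  (\rank (rfix_mx rG X) < \rank (rfix_mx rG Hj))%N.
Proof.
move=> sHM sMG sHX sXG lt.
have e := mxrank_sum_cap (rfix_mx rG X) (rfix_mx rG M).
have l1 : (\rank (rfix_mx rG X + rfix_mx rG M)%MS <= \rank (rfix_mx rG Hj))%N.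
  by apply: mxrankS; rewrite addsmx_sub !rfix_mxS.
have l2 : (\rank (rfix_mx rG X :&: rfix_mx rG M)%MS <= \rank (rfix_mx rG (X <*> M)%G))%N.
  apply: mxrankS; rewrite -rfix_mx_rstabC; last by rewrite /= join_subG sXG.
  rewrite /= join_subG !rfix_mx_rstabC //; first by rewrite capmxSl capmxSr.
have : (\rank (rfix_mx rG X) + \rank (rfix_mx rG M) <=
        \rank (rfix_mx rG Hj) + \rank (rfix_mx rG (X <*> M)%G))%N.
  by rewrite -e leq_add.
move: lt; lia.
Qed.

Lemma chain_step (G M Hj : {group gT}) (chi : 'CF(G)) (th : Iirr G) :
  Hj \subset M -> M \subset G -> chi \is a character -> Pst chi M ->
  (forall X : {group gT}, Hj \proper X -> X \subset M -> D 'chi_th X < D 'chi_th Hj) ->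
  Pst (chi + 'chi_th) Hj.
Proof.
move=> sHM sMG Nchi hP hth X pHX sXG; rewrite !D_add.
have sHX := proper_sub pHX.
case: (boolP (X \subset M)) => [sXM | nXM].
  by apply: ler_ltD; [apply: D_mono | apply: hth].
apply: ltr_leD; last by apply: D_mono (irr_char th) sHX sXG.
move: hP; case/char_reprP: Nchi => [[n rG] ->] hP.
rewrite /D !rfix_rank ?(subset_trans sHM sMG) // ltr_nat.
apply: (rank_step sHM sMG sHX sXG).
have sJG : (X <*> M)%G \subset G by rewrite /= join_subG sXG.
have := hP (X <*> M)%G _ sJG; rewrite /D !rfix_rank // ltr_nat; apply.
rewrite properE /= joing_subr; apply: contra nXM.
by apply: subset_trans; apply: joing_subl.
Qed.

Lemma faithful_of_Pst (G : {group gT}) (chi : 'CF(G)) :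
  chi \is a character -> Pst chi 1%G -> cfaithful chi.
Proof.
move=> Nchi hP; rewrite /cfaithful; apply/negPn/negP => nK.
have pK : (1%G : {group gT}) \proper (cfker chi)%G by rewrite properE sub1G.
have := hP _ pK (cfker_sub chi).
have eD : forall N : {group gT}, N \subset cfker chi -> D chi N = chi 1%g.
  move=> N sN; apply: (mulfI (neq0CG N)).
  rewrite -sum_D ?(subset_trans sN (cfker_sub chi)) //.
  rewrite (eq_bigr (fun _ => chi 1%g)) ?sumr_const ?mulr_natl //.
  by move=> x Nx; apply: cfker1; apply: (subsetP sN).
by rewrite !eD ?sub1G ?ltxx.
Qed.

End Chain.

Lemma lift_irr (gT : finGroupType) (G M : {group gT}) (j : Iirr M) :
  M \subset G -> exists i : Iirr G, '['Res[M] 'chi_i, 'chi_j] != 0.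
Proof.
move=> sMG.
case: (boolP [exists i : Iirr G, '['Ind[G] 'chi_j, 'chi_i] != 0]).
  case/existsP => i nz; exists i.
  by have := constt_Ind_Res i j; rewrite !irr_consttE nz => <-.
move/existsPn => none; exfalso.
have e : 'Ind[G] 'chi_j = 0.
  rewrite (cfun_sum_cfdot ('Ind[G] 'chi_j)) big1 // => i _.
  by move/negPn/eqP: (none i) => ->; rewrite scale0r.
have := congr1 (fun f : 'CF(G) => f 1%g) e; rewrite /= cfInd1 // cfunE.
by apply/eqP; rewrite mulf_neq0 ?irr1_neq0 // pnatr_eq0 -lt0n indexg_gt0.
Qed.

Lemma constt_addirr (gT : finGroupType) (G : {group gT}) (chi : 'CF(G)) (th : Iirr G) :
  (#|irr_constt (chi + 'chi_th)%R| <= #|irr_constt chi|.+1)%N.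
Proof.
apply: leq_trans (_ : #|th |: [set i in irr_constt chi]| <= _)%N; last first.
  by rewrite cardsU1; case: (_ \notin _); rewrite ?add1n ?add0n // cardsE.
apply: subset_leq_card; apply/subsetP => i; rewrite !inE.
rewrite cfdotDl cfdot_irr; case: (eqVneq i th) => [-> | nith] //.
by rewrite addr0.
Qed.

Unset Implicit Arguments.
Theorem corollary6p11 (gT : finGroupType) (G : {group gT})
    (l : nat) (Hs : nat -> {group gT}) :
  (Hs 0%N : {set gT}) = 1%g ->
  (Hs l : {set gT}) = G ->
  (forall i, (i < l)%N ->
     ((Hs i : {set gT}) \proper Hs i.+1)%g /\ bottom_boolean (Hs i) (Hs i.+1)) ->
  exists chi : 'CF(G),
    [/\ chi \is a character, cfaithful chi & (#|irr_constt chi| <= l)%N].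
Proof.
move=> H0 Hl hyp.
have sub : forall k, (k <= l)%N -> Hs (l - k)%N \subset G.
  elim=> [|k IHk] lekl; first by rewrite subn0 Hl.
  have lt : (l - k.+1 < l)%N by lia.
  apply: subset_trans (proper_sub (hyp _ lt).1) _.
  by rewrite subnSK //; apply: IHk; apply: ltnW.
have key : forall m, (m <= l)%N -> exists chi : 'CF(G),
    [/\ chi \is a character, (#|irr_constt chi| <= m)%N & Pst chi (Hs (l - m)%N)].
  elim=> [|m IHm] leml.
    exists 0; split; first exact: rpred0.
      by rewrite leqn0; apply/eqP; apply: eq_card0 => i; rewrite !inE cfdot0l eqxx.
    by move=> X pX sXG; move: pX; rewrite subn0 Hl properE sXG andbF.
  have [chi [Nchi cnt hP]] := IHm (ltnW leml).
  have ltj : (l - m.+1 < l)%N by lia.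
  have ej : ((l - m.+1).+1 = l - m)%N by rewrite subnSK.
  have [pr bb] := hyp _ ltj; rewrite ej in pr bb.
  have sMG := sub m (ltnW leml).
  have [phi [_ goodphi]] := bb_T (proper_sub pr) bb.
  have [th nz] := lift_irr phi sMG.
  exists (chi + 'chi_th); split.
  - by rewrite rpredD ?irr_char.
  - by apply: leq_trans (constt_addirr chi th) _.
  - apply: (chain_step (proper_sub pr) sMG Nchi hP) => X pX sX.
    exact: lift_strict (irr_char th) sMG nz (proper_sub pX) sX (goodphi X pX sX).
have [chi [Nchi cnt hP]] := key l (leqnn l).
exists chi; split => //; apply: faithful_of_Pst Nchi _.
have -> : 1%G = Hs (l - l)%N by apply: val_inj; rewrite subnn /= H0.
exact: hP.
Qed.
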